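(* Let $X$ be a rearrangement invariant space on $(0,\infty)$ with the Fatou property such that $L_\infty\hookrightarrow X$ and the Cesàro operator $C$ is bounded on $X$. Suppose also that $X$ satisfies: for every $f\in X$ and every measurable $A\subset(0,\infty)$ with $m(A)<\infty$, $f\chi_A\in X_a$. Then the Cesàro space $CX$ contains a lattice isometric copy of $\ell_\infty$.
   Context: A rearrangement invariant space on $(0,\infty)$ is a Banach space $X\subset L_0(0,\infty)$ with the ideal property ($|f|\le|g|$ a.e., $g\in X$ imply $f\in X$, $\|f\|_X\le\|g\|_X$), containing an a.e. positive function, in which equimeasurable functions have equal norms. Fatou property: $0\le f_n\uparrow f$ a.e., $\sup\|f_n\|_X<\infty$ imply $f\in X$ and $\|f_n\|_X\uparrow\|f\|_X$. $X_a$ is the ideal of order continuous elements ($f\in X_a$ iff $0\le f_n\le|f|$, $f_n\downarrow0$ a.e. imply $\|f_n\|_X\to0$). $m$ is Lebesgue measure. $C(f)(x)=\frac1x\int_0^x|f(t)|\,dt$; $CX=\{f: C(|f|)\in X\}$ with $\|f\|_{CX}=\|C(|f|)\|_X$. A lattice isometric copy of $\ell_\infty$ is the image of a linear isometric lattice-homomorphic embedding of $\ell_\infty$. *)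

(* Defs.v *)
(* functions on (0,oo) are modelled as R -> R,
   only their values on Dom = ]0,+oo[ matter; Lebesgue measure on R. *)
From HB Require Import structures.
From mathcomp Require Import all_boot all_order all_algebra.
From mathcomp Require Import all_classical all_reals all_analysis.
Set Implicit Arguments. Unset Strict Implicit. Unset Printing Implicit Defensive.
Import Order.TTheory GRing.Theory Num.Theory.
Import numFieldNormedType.Exports.
Local Open Scope classical_set_scope.
Local Open Scope ring_scope.

Definition Dom (R : realType) : set R := `]0, +oo[%classic.
Arguments Dom R : clear implicits.

Notation leb R := (@lebesgue_measure R).

Definition L0 (R : realType) : set (R -> R) :=
  [set f | measurable_fun (Dom R) f].
Arguments L0 R : clear implicits.

Definition distr_fun (R : realType) (f : R -> R) (l : R) : \bar R :=
  leb R [set x | Dom R x /\ l < `|f x|].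

Definition equimeasurable (R : realType) (f g : R -> R) : Prop :=
  forall l : R, 0 < l -> distr_fun f l = distr_fun g l.

(* X is a (real) Banach space of (a.e.-classes of) functions in L_0 with
   norm nX (meaningful on X only) *)
Definition banach_subspace_L0 (R : realType) (X : set (R -> R))
    (nX : (R -> R) -> R) : Prop :=
  X `<=` L0 R /\
      X (fun _ => 0)/\
      (forall f g, X f -> X g -> X (f \+ g))/\
      (forall (a : R) f, X f -> X (fun x => a * f x))/\
      (forall f, X f -> 0 <= nX f)/\
      (forall f, X f -> (nX f = 0 <-> ae_eq (leb R) (Dom R) f (fun _ => 0)))/\
      (forall (a : R) f, X f -> nX (fun x => a * f x) = `|a| * nX f)/\
      (forall f g, X f -> X g -> nX (f \+ g) <= nX f + nX g) /\
      (forall u : nat -> R -> R, (forall n, X (u n)) ->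
         (forall e : R, 0 < e -> exists N : nat, forall m n : nat,
             (N <= m)%N -> (N <= n)%N -> nX (u n \- u m) < e) ->
         exists2 f, X f & (fun n => nX (u n \- f)) @ \oo --> (0 : R)).

Definition ideal_property (R : realType) (X : set (R -> R))
    (nX : (R -> R) -> R) : Prop :=
  forall f g, L0 R f -> X g ->
    (\forall x \ae leb R, Dom R x -> `|f x| <= `|g x|) ->
    X f /\ nX f <= nX g.

Definition ri_space (R : realType) (X : set (R -> R))
    (nX : (R -> R) -> R) : Prop :=
  [/\ banach_subspace_L0 X nX,
      ideal_property X nX,
      (exists2 w, X w & \forall x \ae leb R, Dom R x -> 0 < w x) &
      (forall f g, X f -> L0 R g -> equimeasurable f g ->
         X g /\ nX g = nX f)].

Definition fatou_property (R : realType) (X : set (R -> R))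
    (nX : (R -> R) -> R) : Prop :=
  forall (fn : nat -> R -> R) (f : R -> R),
    (forall n, X (fn n)) -> L0 R f ->
    (\forall x \ae leb R, Dom R x ->
        (forall n, 0 <= fn n x <= fn n.+1 x) /\ (fn ^~ x @ \oo --> f x)) ->
    (exists M : R, forall n, nX (fn n) <= M) ->
    X f /\ (fun n => nX (fn n)) @ \oo --> nX f.

Definition Linfty_embeds (R : realType) (X : set (R -> R)) : Prop :=
  forall f, L0 R f ->
    (exists M : R, \forall x \ae leb R, Dom R x -> `|f x| <= M) -> X f.

Definition order_continuous (R : realType) (X : set (R -> R))
    (nX : (R -> R) -> R) (f : R -> R) : Prop :=
  X f /\
  forall fn : nat -> R -> R, (forall n, L0 R (fn n)) ->
    (\forall x \ae leb R, Dom R x ->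
        (forall n, 0 <= fn n x <= `|f x| /\ fn n.+1 x <= fn n x) /\
        (fn ^~ x @ \oo --> (0 : R))) ->
    (fun n => nX (fn n)) @ \oo --> (0 : R).

Definition loc_int_at0 (R : realType) (f : R -> R) : Prop :=
  forall x : R, 0 < x ->
    (\int[leb R]_(t in `]0%R, x%R]) (`|f t|)%:E < +oo)%E.

(* Cesaro operator  C(f)(x) = 1/x int_0^x |f t| dt
   (only meaningful when loc_int_at0 f holds) *)
Definition cesaro (R : realType) (f : R -> R) : R -> R :=
  fun x => x^-1 * fine (\int[leb R]_(t in `]0, x]) (`|f t|)%:E).

Definition CX (R : realType) (X : set (R -> R)) : set (R -> R) :=
  [set f | L0 R f /\ loc_int_at0 f /\ X (cesaro f)].

Definition nCX (R : realType) (nX : (R -> R) -> R) (f : R -> R) : R :=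
  nX (cesaro f).

Definition cesaro_bounded (R : realType) (X : set (R -> R))
    (nX : (R -> R) -> R) : Prop :=
  exists c : R, forall f, X f -> CX X f /\ nX (cesaro f) <= c * nX f.

Definition linfty (R : realType) : set (nat -> R) :=
  [set a | exists M : R, forall n, `|a n| <= M].

Definition linfty_norm (R : realType) (a : nat -> R) : R :=
  sup (range (fun n => `|a n|)).

Definition lattice_isometric_copy_linfty (R : realType) (Y : set (R -> R))
    (nY : (R -> R) -> R) : Prop :=
  exists T : (nat -> R) -> (R -> R),
    [/\ (forall a, linfty a -> Y (T a)),
        (forall a, linfty a -> nY (T a) = linfty_norm a),
        (forall (k : R) a b, linfty a -> linfty b ->
           ae_eq (leb R) (Dom R) (T (fun n => k * a n + b n))
                 (fun x => k * T a x + T b x)) &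
        (forall a b, linfty a -> linfty b ->
           ae_eq (leb R) (Dom R) (T (fun n => Num.max (a n) (b n)))
                 (fun x => Num.max (T a x) (T b x)))].

(* Main.v *)
Require Import Defs.
From HB Require Import structures.
From mathcomp Require Import all_boot all_order all_algebra.
From mathcomp Require Import all_classical all_reals all_analysis.
From mathcomp Require Import measurable_realfun.
Import Order.TTheory GRing.Theory Num.Theory.
Import numFieldNormedType.Exports.
Local Open Scope classical_set_scope.
Local Open Scope ring_scope.

Definition dd (R : realType) (j : nat) : R := (j`!)%:R.
Definition kk (j : nat) : nat := logn 2 j.+1.
Definition JJ (R : realType) (x : R) : nat :=
  xget 0%N [set j | dd R j <= x < dd R j.+1].
Definition TT (R : realType) (N : R) (a : nat -> R) : R -> R :=
  fun x => a (kk (JJ R x)) / N.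
Arguments TT {R}.

Lemma dd_ge1 (R : realType) j : 1 <= dd R j.
Proof. by rewrite /dd ler1n fact_gt0. Qed.

Lemma dd_le (R : realType) i j : (i <= j)%N -> dd R i <= dd R j.
Proof. by move=> ij; rewrite /dd ler_nat leq_fact. Qed.

Lemma JJ_eq (R : realType) (x : R) j : dd R j <= x < dd R j.+1 -> JJ R x = j.
Proof.
move=> hj; rewrite /JJ; case: xgetP => [i _ /= hi|]; last by move=> /(_ j).
case/andP: hj => h1 h2; case/andP: hi => h3 h4.
case: (ltngtP i j) => // ij.
- have := @dd_le R i.+1 j ij; rewrite leNgt (le_lt_trans h1 h4) //.
- have := @dd_le R j.+1 i ij; rewrite leNgt (le_lt_trans h3 h2) //.
Qed.

Lemma JJ_0 (R : realType) (x : R) :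
  (forall j, ~ (dd R j <= x < dd R j.+1)) -> JJ R x = 0%N.
Proof.
move=> h; rewrite /JJ; case: xgetP => // i _ /= hi; by have := h i.
Qed.

Lemma kk_inf k B : exists j, (B <= j)%N /\ kk j = k.
Proof.
exists (2 ^ k * B.*2.+1).-1; rewrite /kk.
have pos : (0 < 2 ^ k * B.*2.+1)%N by rewrite muln_gt0 expn_gt0.
rewrite prednK //; split.
  rewrite -ltnS prednK //; apply: (leq_trans (n := B.*2.+1)).
    by rewrite ltnS -addnn leq_addr.
  by rewrite leq_pmull // expn_gt0.
rewrite lognM ?expn_gt0 // pfactorK // logn_coprime ?addn0 //.
by rewrite coprime2n /= odd_double.
Qed.

Lemma JJ_pre (R : realType) j :
  [set x : R | JJ R x = j] =
  `[dd R j, dd R j.+1[%classic `|`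
    (if j == 0%N then ~` \bigcup_i `[dd R i, dd R i.+1[%classic else set0).
Proof.
apply/seteqP; split => x /=.
- move=> <-.
  have [[i _ hi]|nh] := pselect ((\bigcup_i `[dd R i, dd R i.+1[%classic) x).
    left; move: hi; rewrite /= in_itv /= => hi; by rewrite (@JJ_eq R x i hi) in_itv.
  right; have -> : JJ R x = 0%N.
    apply: JJ_0 => i hi; apply: nh; exists i => //=; by rewrite in_itv.
  by [].
- case.
    by rewrite in_itv /= => /(@JJ_eq R x j).
  case: eqP => // -> nh; apply: JJ_0 => i hi; apply: nh; exists i => //=.
Qed.

Lemma measurable_JJ (R : realType) j : measurable [set x : R | JJ R x = j].
Proof.
rewrite JJ_pre; apply: measurableU; first exact: measurable_itv.
case: eqP => _; last exact: measurable0.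
apply: measurableC; apply: bigcup_measurable => i _; exact: measurable_itv.
Qed.

Lemma measurable_TT (R : realType) (N : R) a : measurable_fun setT (TT N a).
Proof.
move=> _ Y mY; rewrite setTI.
have -> : TT N a @^-1` Y =
    \bigcup_(j in [set j | Y (a (kk j) / N)]) [set x | JJ R x = j].
  apply/seteqP; split => x /=.
    by move=> hx; exists (JJ R x).
  by case=> j /= hj hx; rewrite /TT hx.
by apply: bigcup_measurable => j _; exact: measurable_JJ.
Qed.

Definition Iint (R : realType) (f : R -> R) (x : R) : \bar R :=
  \int[leb R]_(t in `]0, x]) (`|f t|)%:E.
Arguments Iint {R}.

Lemma mabsE (R : realType) (f : R -> R) (D : set R) :
  measurable_fun setT f -> measurable_fun D (fun t : R => @EFin R `|f t|).
Proof.
move=> mf; apply/measurable_EFinP.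
apply: (measurableT_comp (@normr_measurable R setT)).
exact: (measurable_funS measurableT (@subsetT _ D) mf).
Qed.

Lemma leb_oc (R : realType) (x : R) : 0 < x -> leb R `]0, x] = x%:E.
Proof. by move=> x0; rewrite lebesgue_measure_itv /= lte_fin x0 sube0. Qed.

Lemma leb_oc_le (R : realType) (x : R) : x <= 0 -> leb R `]0, x] = 0%E.
Proof. by move=> x0; rewrite lebesgue_measure_itv /= lte_fin ltNge x0. Qed.

Lemma Iint_ge0 (R : realType) (f : R -> R) x : (0 <= Iint f x)%E.
Proof. by apply: integral_ge0 => t _; rewrite lee_fin. Qed.

Lemma Iint_le (R : realType) (f : R -> R) B x : measurable_fun setT f ->
  (forall t, `|f t| <= B) -> 0 < x -> (Iint f x <= (B * x)%:E)%E.
Proof.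
move=> mf fB x0; rewrite /Iint.
have B0 : 0 <= B by apply: le_trans (fB 0).
have H : (\int[leb R]_(t in `]0%R, x%R]) `|(EFin \o f) t| <= B%:E * leb R `]0%R, x%R])%E.
  apply: integral_le_bound.
  - exact: measurable_itv.
  - exact: (measurable_funS measurableT (@subsetT _ _) (proj2 (measurable_EFinP _ _) mf)).
  - by rewrite lee_fin.
  - by apply: aeW => t _ /=; rewrite lee_fin.
move: H; rewrite leb_oc // -EFinM.
Qed.

Lemma Iint_fin (R : realType) (f : R -> R) B x : measurable_fun setT f ->
  (forall t, `|f t| <= B) -> Iint f x \is a fin_num.
Proof.
move=> mf fB; rewrite ge0_fin_numE ?Iint_ge0 //.
have [x0|] := boolP (0 < x).
  exact: (le_lt_trans (@Iint_le R f B x mf fB x0) (ltry _)).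
rewrite -leNgt => x0.
rewrite /Iint.
have -> : `]0, x]%classic = set0 :> set R.
  apply/seteqP; split => t //=; rewrite in_itv /= => /andP[h1 h2].
  by have := lt_le_trans h1 (le_trans h2 x0); rewrite ltxx.
by rewrite integral_set0 ltry.
Qed.

Lemma Iint_nd (R : realType) (f : R -> R) B : measurable_fun setT f ->
  (forall t, `|f t| <= B) -> {homo (fun x => fine (Iint f x)) : x y / x <= y}.
Proof.
move=> mf fB x y xy /=; apply: fine_le; try exact: (@Iint_fin R f B _ mf fB).
apply: ge0_subset_integral => //; try exact: measurable_itv.
- exact: mabsE.
- move=> t /=; rewrite !in_itv /= => /andP[-> h2]; exact: le_trans h2 xy.
Qed.

Lemma cesaro_meas (R : realType) (f : R -> R) B : measurable_fun setT f ->
  (forall t, `|f t| <= B) -> L0 R (Defs.cesaro f).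
Proof.
move=> mf fB; rewrite /L0 /=.
change (measurable_fun (Dom R) ((@GRing.inv R) \* (fun x => fine (Iint f x)))).
apply: measurable_funM.
- apply: open_continuous_measurable_fun; first exact: interval_open.
  move=> x; rewrite inE /Dom /= in_itv /= andbT => x0.
  by apply: inv_continuous; rewrite gt_eqF.
- apply: nondecreasing_measurable; first exact: measurable_itv.
  exact: (@Iint_nd R f B mf fB).
Qed.

Lemma cesaro_bound (R : realType) (f : R -> R) B x : measurable_fun setT f ->
  (forall t, `|f t| <= B) -> 0 < x -> 0 <= Defs.cesaro f x <= B.
Proof.
move=> mf fB x0; rewrite /Defs.cesaro.
have F0 : 0 <= fine (Iint f x) by apply: fine_ge0; exact: Iint_ge0.
apply/andP; split; first by rewrite mulr_ge0 // invr_ge0 ltW.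
rewrite ler_pdivrMl //.
have := @Iint_le R f B x mf fB x0; rewrite -(fineK (@Iint_fin R f B x mf fB)) lee_fin.
by rewrite mulrC.
Qed.

Lemma loc_int_bound (R : realType) (f : R -> R) B : measurable_fun setT f ->
  (forall t, `|f t| <= B) -> loc_int_at0 f.
Proof.
move=> mf fB x x0; have := @Iint_fin R f B x mf fB.
by rewrite ge0_fin_numE ?Iint_ge0.
Qed.

Arguments measurable_TT {R}.
Arguments JJ_eq {R}.
Arguments dd_ge1 {R}.

Lemma TT_bound (R : realType) (N : R) a S : 0 < N -> (forall n, `|a n| <= S) ->
  forall x, `|TT N a x| <= S / N.
Proof.
move=> N0 aS x; rewrite /TT normrM (gtr0_norm (_ : 0 < N^-1)) ?invr_gt0 //.
by rewrite ler_pM2r ?invr_gt0.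
Qed.

Lemma TT_on (R : realType) (N : R) a j x : dd R j <= x < dd R j.+1 ->
  TT N a x = a (kk j) / N.
Proof. by move=> h; rewrite /TT (JJ_eq x j h). Qed.

Lemma Iint_TT_lb (R : realType) (N : R) a j x : 0 < N ->
  dd R j <= x < dd R j.+1 ->
  (((`|a (kk j)| / N) * (x - dd R j))%:E <= Iint (TT N a) x)%E.
Proof.
move=> N0 /andP[h1 h2].
have sub : `[dd R j, x] `<=` `]0, x].
  move=> t /=; rewrite !in_itv /= => /andP[t1 ->]; rewrite andbT.
  exact: lt_le_trans (lt_le_trans ltr01 (dd_ge1 j)) t1.
have H := @ge0_subset_integral _ _ R (leb R) _ _ (measurable_itv `[dd R j, x])
  (measurable_itv `]0, x]) (fun t => (`|TT N a t|)%:E)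
  (@mabsE R (TT N a) _ (measurable_TT N a)) (fun t _ => normr_ge0 (TT N a t)) sub.
apply: le_trans H; rewrite /=.
rewrite (@eq_integral _ _ _ _ _ (cst ((`|a (kk j)| / N)%:E))); last first.
  move=> t; rewrite inE /= in_itv /= => /andP[t1 t2].
  rewrite (@TT_on R N a j t); last by rewrite t1 (le_lt_trans t2 h2).
  by rewrite normrM (gtr0_norm (_ : 0 < N^-1)) ?invr_gt0 //.
rewrite integral_cst; last exact: measurable_itv.
have L : leb R `[dd R j, x] = (x - dd R j)%:E.
  rewrite lebesgue_measure_itv /= lte_fin; case: ltP => h; first by rewrite EFinB.
  have -> : x = dd R j by apply: le_anti; rewrite h h1.
  by rewrite subrr.
set m := (X in (_ * X)%E).
have -> : m = (x - dd R j)%:E by rewrite -L.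
by rewrite -EFinM.
Qed.

Lemma cesaro_TT_lb (R : realType) (N : R) a S j x (m : nat) : 0 < N ->
  (forall n, `|a n| <= S) ->
  dd R j <= x < dd R j.+1 -> m.+1%:R * dd R j <= x ->
  `|a (kk j)| / N * (1 - m.+1%:R^-1) <= Defs.cesaro (TT N a) x.
Proof.
move=> N0 aS hx hm.
have d1 := dd_ge1 (R:=R) j.
have x0 : 0 < x.
  apply: lt_le_trans hm; rewrite mulr_gt0 // ?ltr0Sn //.
  exact: lt_le_trans ltr01 d1.
have := @Iint_TT_lb R N a j x N0 hx.
have Ifin := @Iint_fin R (TT N a) (S / N) x (measurable_TT N a) (@TT_bound R N a S N0 aS).
rewrite -(fineK Ifin) lee_fin /Defs.cesaro => hI.
set c := `|a (kk j)| / N in hI *.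
set F := fine _ in hI *.
have c0 : 0 <= c by rewrite divr_ge0 // ltW.
have xd : x^-1 * (c * (x - dd R j)) = c * (1 - dd R j / x).
  by rewrite mulrCA mulrBr mulVf ?gt_eqF // [x^-1 * _]mulrC.
apply: (@le_trans _ _ (c * (1 - dd R j / x))); last first.
  by rewrite -xd; apply: ler_wpM2l; [rewrite invr_ge0 ltW|].
apply: ler_wpM2l => //; rewrite lerD2l lerN2.
rewrite ler_pdivrMr // ler_pdivlMl // ltr0Sn.
Qed.

Lemma indic_L0 (R : realType) (A : set R) : measurable A -> L0 R (\1_A).
Proof. by move=> mA; exact: measurable_indic. Qed.
Arguments indic_L0 {R A}.

Lemma indic_le1 (R : realType) (A : set R) x : `|(\1_A x : R)| <= 1.
Proof. by rewrite indicE; case: (x \in A); rewrite ?normr1 ?normr0. Qed.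

Lemma indic_X (R : realType) (X : set (R -> R)) (A : set R) :
  Linfty_embeds X -> measurable A -> X (\1_A).
Proof.
move=> LX mA; apply: LX; first exact: indic_L0.
by exists 1; apply: aeW => x _; exact: indic_le1.
Qed.
Arguments indic_X {R X A}.

Lemma distr_indic (R : realType) (A : set R) (l : R) : A `<=` Dom R -> 0 < l ->
  [set x | Dom R x /\ l < `|(\1_A x : R)|] = if l < 1 then A else set0.
Proof.
move=> AD l0; apply/seteqP; split => x /=.
- move=> [_]; rewrite indicE; case: (boolP (x \in A)) => xA /=.
    by rewrite normr1 => ->; rewrite inE in xA.
  by rewrite normr0 => /(lt_trans l0); rewrite ltxx.
- case: ifP => // l1 Ax; split; first exact: AD.
  by rewrite indicE mem_set // normr1.
Qed.

Lemma ri_indic (R : realType) (X : set (R -> R)) nX (al : R) (n : nat) :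
  ri_space X nX -> Linfty_embeds X -> 0 < al ->
  nX (\1_`[al, al + n.+1%:R[) = nX (\1_`]0, n.+1%:R[).
Proof.
move=> [_ _ _ H] LX al0.
suff E : equimeasurable (\1_`]0, n.+1%:R[ : R -> R) (\1_`[al, al + n.+1%:R[).
  by have [_ ->] := H _ _ (indic_X LX (measurable_itv _)) (indic_L0 (measurable_itv _)) E.
move=> l l0; rewrite /distr_fun !distr_indic //.
- case: ifP => // _.
  have h1 : leb R `]0, n.+1%:R[ = n.+1%:R%:E.
    by rewrite lebesgue_measure_itv /= lte_fin ltr0Sn sube0.
  have h2 : leb R `[al, al + n.+1%:R[ = n.+1%:R%:E.
    rewrite lebesgue_measure_itv /= lte_fin ltrDl ltr0Sn -EFinB.
    by rewrite addrAC subrr add0r.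
  by rewrite h1 h2.
- move=> x /=; rewrite in_itv /= => /andP[h _]; rewrite /Dom /= in_itv /= andbT.
  exact: lt_le_trans al0 h.
- move=> x /=; rewrite in_itv /= => /andP[h _]; by rewrite /Dom /= in_itv /= andbT.
Qed.

Lemma fatou_phi (R : realType) (X : set (R -> R)) nX :
  ri_space X nX -> fatou_property X nX -> Linfty_embeds X ->
  (fun n => nX (\1_`]0, n%:R[ : R -> R)) @ \oo --> nX (fun _ => 1).
Proof.
move=> [_ ideal _ _] F LX.
have X1 : X (fun _ : R => 1).
  apply: LX; first exact: measurable_cst.
  by exists 1; apply: aeW => x _; rewrite normr1.
apply: (proj2 (F _ _ _ _ _ _)).
- move=> n; exact: indic_X LX (measurable_itv _).
- exact: measurable_cst.
- apply: aeW => x; rewrite /Dom /= in_itv /= andbT => x0; split.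
  + move=> n.
    have le : `]0, n%:R[ `<=` (`]0, n.+1%:R[ : set R).
      move=> t /=; rewrite !in_itv /= => /andP[-> h] /=.
      by apply: lt_le_trans h _; rewrite ler_nat.
    rewrite !indicE; case: (boolP (x \in `]0, n%:R[%classic)) => h /=.
      by rewrite (mem_set (le _ (set_mem h))) /= ler01 lexx.
    by rewrite lexx ler0n.
  + apply: cvg_near_cst; exists (Num.truncn x).+1 => // n /= hn.
    rewrite indicE mem_set //= in_itv /= x0 /=.
    apply: lt_le_trans (truncnS_gt x) _; by rewrite ler_nat.
- exists (nX (fun _ => 1)) => n.
  apply: (proj2 (ideal _ _ (indic_L0 (measurable_itv _)) X1 _)).
  by apply: aeW => x _; rewrite normr1; exact: indic_le1.
Qed.

Lemma N_pos (R : realType) (X : set (R -> R)) nX :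
  ri_space X nX -> Linfty_embeds X -> 0 < nX (fun _ => 1).
Proof.
move=> [[_ [_ [_ [_ [ge0 [zero _]]]]]] _ _ _] LX.
have X1 : X (fun _ : R => 1).
  apply: LX; first exact: measurable_cst.
  by exists 1; apply: aeW => x _; rewrite normr1.
rewrite lt_def ge0 // andbT; apply/negP => /eqP h.
have ae := proj1 (zero _ X1) h.
case: ae => B [mB B0 sub].
have sub' : `]0, 1[ `<=` B.
  move=> t ht; apply: sub => /= H.
  have Dt : Dom R t by move: ht => /=; rewrite /Dom /= !in_itv /= => /andP[-> _].
  by have /eqP := H Dt; rewrite oner_eq0.
have := le_measure (leb R) (mem_set (measurable_itv `]0, 1[)) (mem_set mB) sub'.
set m1 := (X in (X <= _)%E); set m2 := (X in (_ <= X)%E).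
have L1 : leb R `]0, 1[ = 1%:E.
  by rewrite lebesgue_measure_itv /= lte_fin ltr01 sube0.
have -> : m2 = 0%E by rewrite -B0.
have -> : m1 = 1%:E by rewrite -L1.
by rewrite lee_fin leNgt ltr01.
Qed.

Arguments N_pos {R X nX}.
Arguments fatou_phi {R X nX}.
Arguments ri_indic {R X nX}.
Arguments measurable_TT {R}.
Arguments dd_ge1 {R}.

Theorem proposition4p4 (R : realType) (X : set (R -> R))
    (nX : (R -> R) -> R) :
  ri_space X nX ->
  fatou_property X nX ->
  Linfty_embeds X ->
  cesaro_bounded X nX ->
  (forall f (A : set R), X f -> measurable A -> A `<=` Dom R ->
     (leb R A < +oo)%E ->
     order_continuous X nX (fun x => f x * (\1_A x : R))) ->
  lattice_isometric_copy_linfty (CX X) (nCX nX).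
Proof.
move=> ri F LX _ _.
have N0 := N_pos ri LX.
set N := nX (fun _ => 1) in N0.
have [[_ [_ [_ [_ [ge0 [zero [homog _]]]]]]] ideal _ _] := ri.
have X1 : X (fun _ : R => 1).
  apply: LX; first exact: measurable_cst.
  by exists 1; apply: aeW => x _; rewrite normr1.
have Xc : forall r : R, X (fun _ => r).
  move=> r; apply: LX; first exact: measurable_cst.
  by exists `|r|; apply: aeW => x _.
have nXc : forall r : R, nX (fun _ => r) = `|r| * N.
  move=> r; rewrite -homog //; congr nX; apply: funext => x; by rewrite mulr1.
have memb : forall a S, (forall n, `|a n| <= S) ->
    CX X (TT N a) /\ nX (Defs.cesaro (TT N a)) <= S.
  move=> a S aS.
  have bd := @TT_bound R N a S N0 aS.
  have S0 : 0 <= S by apply: le_trans (aS 0%N).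
  have mT := measurable_TT N a.
  have cL0 := @cesaro_meas R (TT N a) (S / N) mT bd.
  have ae : \forall x \ae leb R, Dom R x ->
      `|Defs.cesaro (TT N a) x| <= `|S / N|.
    apply: aeW => x; rewrite /Dom /= in_itv /= andbT => x0.
    have /andP[c0 c1] := @cesaro_bound R (TT N a) (S / N) x mT bd x0.
    by rewrite ger0_norm // (le_trans c1 (ler_norm _)).
  have [Xc' le] := ideal _ _ cL0 (Xc (S / N)) ae.
  split.
    split; first exact: (measurable_funS measurableT (@subsetT _ _) mT).
    by split; [exact: (@loc_int_bound R (TT N a) (S / N) mT bd)|].
  apply: le_trans le _; rewrite nXc ger0_norm ?divr_ge0 ?(ltW N0) //.
  by rewrite divfK ?gt_eqF.
exists (TT N); split.
- by move=> a [S aS]; exact: (memb a S aS).1.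
- move=> a [M aM].
  have hub : has_ubound (range (fun n => `|a n|)).
    by exists M => _ [n _ <-].
  rewrite /linfty_norm; set S := sup _.
  have aS : forall n, `|a n| <= S by move=> n; apply: (ub_le_sup hub); exists n.
  have [[_ [_ Xces]] le1] := memb a S aS.
  rewrite /nCX; apply: le_anti; rewrite le1 /=.
  apply: ge_sup; first by exists `|a 0%N|, 0%N.
  move=> _ [k _ <-].
  set y := nX (Defs.cesaro (TT N a)).
  set c := `|a k| / N.
  have c0 : 0 <= c by rewrite divr_ge0 // ltW.
  pose phi n := nX (\1_`]0, n%:R[ : R -> R).
  pose u n := c * (1 - n.+1%:R^-1) * phi n.+1.
  have ub : forall n, u n <= y.
    move=> n.
    have [j [jn kj]] := kk_inf k (n.+1 + n.+1).
    have d1 := dd_ge1 (R:=R) j.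
    set al := n.+1%:R * dd R j.
    have al0 : 0 < al by rewrite mulr_gt0 ?ltr0Sn // (lt_le_trans ltr01 d1).
    have dal : dd R j <= al.
      by rewrite /al ler_peMl ?ler1n // (le_trans ler01 d1).
    have aend : al + n.+1%:R <= dd R j.+1.
      rewrite /al /dd -natrM -natrD ler_nat factS.
      have f1 := fact_gt0 j.
      apply: (@leq_trans ((n.+1 + n.+1) * j`!)).
        by rewrite mulnDl leq_add2l leq_pmulr.
      by rewrite leq_mul2r ltnW ?orbT.
    set c' := c * (1 - n.+1%:R^-1).
    have c'0 : 0 <= c'.
      by rewrite mulr_ge0 // subr_ge0 invf_le1 ?ltr0Sn // ler1n.
    have pt : \forall x \ae leb R, Dom R x ->
        `|c' * \1_`[al, al + n.+1%:R[ x| <= `|Defs.cesaro (TT N a) x|.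
      apply: aeW => x _; rewrite indicE; case: (boolP (x \in _)) => hx.
      - rewrite mulr1 ger0_norm //; apply: le_trans (ler_norm _).
        move: hx; rewrite inE /= in_itv /= => /andP[h1 h2].
        rewrite /c' /c -kj.
        apply: (@cesaro_TT_lb R N a S j x n N0 aS).
          by rewrite (le_trans dal h1) (lt_le_trans h2 aend).
        exact: h1.
      - by rewrite mulr0 normr0.
    have mL0 : L0 R (fun x => c' * \1_`[al, al + n.+1%:R[ x).
      apply: measurable_funM; first exact: measurable_cst.
      exact: measurable_indic (measurable_itv _).
    have [_ h] := ideal _ _ mL0 Xces pt.
    move: h; rewrite homog; last exact: indic_X LX (measurable_itv _).
    by rewrite (ri_indic _ _ ri LX al0) ger0_norm.
  have cu : u @ \oo --> c * N.
    have -> : c * N = c * (1 - 0) * N by rewrite subr0 mulr1.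
    apply: cvgM; first apply: cvgM; first exact: cvg_cst.
      by apply: cvgB; [exact: cvg_cst | exact: cvg_harmonic].
    have := fatou_phi ri F LX; rewrite -cvg_shiftS; exact.
  have ev : \forall n \near \oo, u n <= y by apply: filterE; exact: ub.
  have := limr_le (cvgP _ cu) ev.
  rewrite (cvg_lim _ cu) // /c divfK ?gt_eqF //; apply; exact: eventually_proper.
- move=> k a b _ _; apply: aeW => x _; rewrite /TT.
  by rewrite mulrDl mulrA.
- move=> a b _ _; apply: aeW => x _; rewrite /TT.
  by rewrite maxr_pMl // invr_ge0 ltW.
Qed.
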